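(* Consider CAV $i$ and CAV $i-1$ on different roads, in the safe-merging setting of the context, under (A1), (SA) and (A4). Assume $v_i\ge0$ at all times and $u_{\min}\le0$. Suppose that at each sampling time $t$ the control applied on $[t,t+\Delta t)$ is a feasible point of QP$_2(t)$ whenever QP$_2(t)$ is feasible. Then QP$_2(t_i^0+k\Delta t)$ is feasible for every integer $k\ge0$ with $[t_i^0+k\Delta t,\,t_i^0+(k+1)\Delta t]\subset[t_i^0,t_i^m]$.
   Context: **Vehicle model and times.** The vehicle dynamics are $\dot x_i=v_i$ and $\dot v_i=u_i$, where $x_i\in[0,L]$ is the distance travelled by CAV $i$ from the origin of its road, $v_i$ its speed and $u_i$ its acceleration (the control). The merging point is at position $L>0$ on each road. CAV $i$ enters at time $t_i^0$ and reaches the merging point at time $t_i^m$. CAV $i-1$ is the CAV immediately ahead of $i$ in the first-in-first-out crossing order, on the other road, with position $x_{i-1}$, speed $v_{i-1}$ and acceleration $u_{i-1}$, all known to CAV $i$. Let $z_{i,i-1}=x_{i-1}-x_i$, let $\varphi>0$, $\delta$ and $k_2>0$ be constants, and let $\varphi_2=\varphi/L$. **Control bounds.** Control bounds are $u_{\min}\le u_i\le u_{i,\max}$ with $u_{\min}<0<u_{i,\max}$. **(A1) Common minimum acceleration.** All CAVs share the same minimum acceleration $u_{\min}$. In particular $u_{i-1}(t)\ge u_{\min}$ for all $t$. **Functions of time:** - Merging safety function: $b_2=z_{i,i-1}-\varphi_2x_iv_i-\delta$. - CBF constraint: $b_{\mathrm{cbf}_2}(u_i)=v_{i-1}-v_i-\varphi_2v_i^2-\varphi_2x_iu_i+k_2b_2\ge0$.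 - Feasibility function: $b_F=v_{i-1}-v_i-\varphi_2v_i^2+k_2b_2-\varphi_2x_iu_{\min}$. - Auxiliary function: $b_{\eta_2}=v_{i-1}-v_i-\varphi_2v_i^2-\varphi_2x_iu_{\min}$. - Feasibility constraint: $\eta_2(u_i)=u_{i-1}-u_i-2\varphi_2v_iu_i-\varphi_2v_iu_{\min}+k_2 b_{\eta_2}\ge0$. Note that $\eta_2=\dot b_{\eta_2}+k_2b_{\eta_2}$ and $\dot b_F+k_2b_F=\eta_2+k_2b_{\mathrm{cbf}_2}$. **QP$_2(t)$.** QP$_2(t)$ is the quadratic program in the variables $(u_i,e_i)$ that minimizes $\beta e_i^2+\tfrac12(u_i-u_{\mathrm{ref}}(t))^2$ subject to: - $b_{\mathrm{cbf}_2}(u_i)\ge0$, - $u_{\min}\le u_i\le u_{i,\max}$, - $\eta_2(u_i)\ge0$, - a control Lyapunov constraint $c_1(t)+c_2(t)u_i\le e_i$ with a free slack variable $e_i$. All quantities are evaluated at time $t$. ''Feasible'' means the constraint set is nonempty. **(SA) Sampling / forward invariance.** The control is held constant on each $[t,t+\Delta t)$, and $\Delta t$ is small enough that for each $b\in\{b_2,b_F,b_{\eta_2}\}$: if $b(t)\ge0$ and $\dot b(t)+k_2b(t)\ge0$ under the applied controls, then $b(t+\Delta t)\ge0$. **(A4) Initial conditions.** $b_2(t_i^0)\ge0$, $b_F(t_i^0)\ge0$ and $b_{\eta_2}(t_i^0)\ge0$, where $b_F$ is the merging feasibility function above. *)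

(* Defs.v *)
From Stdlib Require Import Reals.
From Coquelicot Require Import Coquelicot.
Open Scope R_scope.

(** Controls are piecewise constant (held on [t, t+dt)), so the time
    derivatives of the speeds (and of the b-functions) at sampling times
    are right derivatives. *)
Definition right_deriv (f : R -> R) (t d : R) : Prop :=
  filterlim (fun h => (f (t + h) - f t) / h) (at_right 0) (locally d).

(** Notation of the paper: xi, vi (CAV i), xp, vp, up (CAV i-1),
    phi2 = phi / L. *)

Definition b2 (phi2 delta xi vi xp : R) : R :=
  (xp - xi) - phi2 * xi * vi - delta.

Definition bcbf2 (phi2 delta k2 xi vi xp vp ui : R) : R :=
  vp - vi - phi2 * vi ^ 2 - phi2 * xi * ui + k2 * b2 phi2 delta xi vi xp.

Definition bF (phi2 delta k2 umin xi vi xp vp : R) : R :=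
  vp - vi - phi2 * vi ^ 2 + k2 * b2 phi2 delta xi vi xp - phi2 * xi * umin.

Definition beta2 (phi2 umin xi vi vp : R) : R :=
  vp - vi - phi2 * vi ^ 2 - phi2 * xi * umin.

Definition eta2 (phi2 k2 umin xi vi vp up ui : R) : R :=
  up - ui - 2 * phi2 * vi * ui - phi2 * vi * umin
  + k2 * beta2 phi2 umin xi vi vp.

(** Constraint set of QP_2(t) in the variables (u, e), all state
    quantities evaluated at time t; c1, c2 are the CLF coefficients at t.
    (The objective beta e^2 + 1/2 (u - u_ref)^2 plays no role in
    feasibility.) *)
Definition QP2_constraints (phi2 delta k2 umin umax : R)
    (xi vi xp vp up c1 c2 : R) (u e : R) : Prop :=
  0 <= bcbf2 phi2 delta k2 xi vi xp vp u /\
  umin <= u <= umax /\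
  0 <= eta2 phi2 k2 umin xi vi vp up u /\
  c1 + c2 * u <= e.

Definition QP2_feasible (phi2 delta k2 umin umax : R)
    (xi vi xp vp up c1 c2 : R) : Prop :=
  exists u e, QP2_constraints phi2 delta k2 umin umax xi vi xp vp up c1 c2 u e.

(* Main.v *)
Require Import Defs.
From Stdlib Require Import Reals Lra.
From Coquelicot Require Import Coquelicot.
Open Scope R_scope.


Lemma lim_plus (f g : R -> R) a b :
  filterlim f (at_right 0) (locally a) -> filterlim g (at_right 0) (locally b) ->
  filterlim (fun h => f h + g h) (at_right 0) (locally (a + b)).
Proof.
  intros Hf Hg.
  apply (filterlim_comp_2 f g Rplus Hf Hg).
  exact (@filterlim_plus R_AbsRing R_NormedModule a b).
Qed.

Lemma lim_mult (f g : R -> R) a b :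
  filterlim f (at_right 0) (locally a) -> filterlim g (at_right 0) (locally b) ->
  filterlim (fun h => f h * g h) (at_right 0) (locally (a * b)).
Proof.
  intros Hf Hg.
  apply (filterlim_comp_2 f g Rmult Hf Hg).
  exact (@filterlim_mult R_AbsRing a b).
Qed.

Lemma ev_pos : at_right 0 (fun h => 0 < h).
Proof. unfold at_right, within. apply filter_forall. auto. Qed.

Lemma lim_id0 : filterlim (fun h => h) (at_right 0) (locally 0).
Proof.
  intros P HP. unfold at_right, within. unfold filtermap.
  apply (filter_imp P); auto.
Qed.

Lemma rd_ext (f g : R -> R) t d d' :
  (forall s, f s = g s) -> d = d' -> right_deriv f t d -> right_deriv g t d'.
Proof.
  intros H Hd Hf. subst. unfold right_deriv in *.
  eapply filterlim_ext_loc; [|exact Hf]. apply filter_forall. intros h.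
  rewrite !H. reflexivity.
Qed.

Lemma rd_const c t : right_deriv (fun _ => c) t 0.
Proof.
  unfold right_deriv. eapply filterlim_ext_loc; [|apply filterlim_const].
  apply filter_forall. intros h. simpl. unfold Rdiv. ring.
Qed.

Lemma rd_plus f g t a b : right_deriv f t a -> right_deriv g t b ->
  right_deriv (fun s => f s + g s) t (a + b).
Proof.
  unfold right_deriv. intros Hf Hg.
  eapply filterlim_ext_loc; [|exact (lim_plus _ _ _ _ Hf Hg)].
  apply filter_forall. intros h. simpl. unfold Rdiv. ring.
Qed.

Lemma rd_scal c f t a : right_deriv f t a -> right_deriv (fun s => c * f s) t (c * a).
Proof.
  unfold right_deriv. intros Hf.
  eapply filterlim_ext_loc; [|exact (lim_mult _ _ _ _ (filterlim_const c) Hf)].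
  apply filter_forall. intros h. simpl. unfold Rdiv. ring.
Qed.

Lemma rd_cont f t a : right_deriv f t a ->
  filterlim (fun h => f (t + h)) (at_right 0) (locally (f t)).
Proof.
  unfold right_deriv. intros Hf.
  assert (H := lim_plus _ _ _ _ (filterlim_const (f t)) (lim_mult _ _ _ _ lim_id0 Hf)).
  replace (f t + 0 * a) with (f t) in H by ring.
  eapply filterlim_ext_loc; [|exact H].
  eapply filter_imp; [|exact ev_pos]. intros h Hh. simpl. field. lra.
Qed.

Lemma rd_mult f g t a b : right_deriv f t a -> right_deriv g t b ->
  right_deriv (fun s => f s * g s) t (f t * b + g t * a).
Proof.
  intros Hf Hg. assert (Hc := rd_cont _ _ _ Hf). unfold right_deriv in *.
  assert (H := lim_plus _ _ _ _ (lim_mult _ _ _ _ Hc Hg)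
                 (lim_mult _ _ _ _ (filterlim_const (g t)) Hf)).
  eapply filterlim_ext_loc; [|exact H].
  eapply filter_imp; [|exact ev_pos]. intros h Hh. simpl. field. lra.
Qed.

Lemma feas phi2 delta k2 umin umax xi vi xp vp up c1 c2 :
  0 < phi2 -> 0 <= vi -> umin <= 0 -> umin <= up -> umin <= umax ->
  0 <= bF phi2 delta k2 umin xi vi xp vp -> 0 <= beta2 phi2 umin xi vi vp -> 0 < k2 ->
  QP2_feasible phi2 delta k2 umin umax xi vi xp vp up c1 c2.
Proof.
  intros Hp Hv Hu Hup Hux HF HB Hk.
  exists umin, (c1 + c2 * umin). unfold QP2_constraints.
  assert (E1 : bcbf2 phi2 delta k2 xi vi xp vp umin = bF phi2 delta k2 umin xi vi xp vp)
    by (unfold bcbf2, bF; ring).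
  assert (P : 0 <= phi2 * vi * (- umin)).
  { apply Rmult_le_pos; [apply Rmult_le_pos|]; lra. }
  assert (P2 : 0 <= k2 * beta2 phi2 umin xi vi vp) by (apply Rmult_le_pos; lra).
  split; [lra|]. split; [lra|]. split; [|lra].
  unfold eta2. nra.
Qed.

Lemma rd_beta phi2 umin x v vp t dv dvp dx :
  right_deriv x t dx -> right_deriv v t dv -> right_deriv vp t dvp ->
  right_deriv (fun s => beta2 phi2 umin (x s) (v s) (vp s)) t
    (dvp - dv - phi2 * (v t * dv + v t * dv) - phi2 * dx * umin).
Proof.
  intros Hx Hv Hvp.
  assert (H := rd_plus _ _ _ _ _ (rd_plus _ _ _ _ _ (rd_plus _ _ _ _ _ Hvp (rd_scal (-1) _ _ _ Hv))
     (rd_scal (- phi2) _ _ _ (rd_mult _ _ _ _ _ Hv Hv)))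
     (rd_scal (- phi2 * umin) _ _ _ Hx)).
  eapply rd_ext; [| |exact H].
  - intros s. unfold beta2. simpl. ring.
  - ring.
Qed.

Lemma rd_bF phi2 delta k2 umin x v xp vp t dx dv dxp dvp :
  right_deriv x t dx -> right_deriv v t dv -> right_deriv xp t dxp -> right_deriv vp t dvp ->
  right_deriv (fun s => bF phi2 delta k2 umin (x s) (v s) (xp s) (vp s)) t
    ((dvp - dv - phi2 * (v t * dv + v t * dv) - phi2 * dx * umin)
     + k2 * (dxp - dx - phi2 * (x t * dv + v t * dx))).
Proof.
  intros Hx Hv Hxp Hvp.
  assert (H := rd_plus _ _ _ _ _ (rd_beta phi2 umin x v vp t dv dvp dx Hx Hv Hvp)
    (rd_scal k2 _ _ _ (rd_plus _ _ _ _ _ (rd_plus _ _ _ _ _ (rd_plus _ _ _ _ _ Hxp (rd_scal (-1) _ _ _ Hx))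
       (rd_scal (-phi2) _ _ _ (rd_mult _ _ _ _ _ Hx Hv))) (rd_const (-delta) t)))).
  eapply rd_ext; [| |exact H].
  - intros s. unfold bF, beta2, b2. simpl. ring.
  - ring.
Qed.

From Stdlib Require Import Reals.
From Coquelicot Require Import Coquelicot.
Open Scope R_scope.

Theorem theorem4
  (* constants *)
  (L phi delta k2 umin umax dt t0 tm : R)
  (* trajectories of CAV i (x, v, applied control u) and CAV i-1 (xp, vp, up),
     and the CLF coefficients c1, c2 of QP_2 *)
  (x v u xp vp up c1 c2 : R -> R)
  (HL : 0 < L) (Hphi : 0 < phi) (Hk2 : 0 < k2) (Hdt : 0 < dt)
  (* control bounds *)
  (Humin : umin < 0) (Humax : 0 < umax)
  (* CAV i enters at t0 (at the origin) and reaches the merging point L at tm *)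
  (Hx0 : x t0 = 0) (Hxm : x tm = L)
  (HxL : forall t, t0 <= t <= tm -> 0 <= x t <= L)
  (* vehicle dynamics (right derivatives, controls piecewise constant) *)
  (Hdx : forall t, t0 <= t < tm -> right_deriv x t (v t))
  (Hdv : forall t, t0 <= t < tm -> right_deriv v t (u t))
  (Hdxp : forall t, t0 <= t < tm -> right_deriv xp t (vp t))
  (Hdvp : forall t, t0 <= t < tm -> right_deriv vp t (up t))
  (* control held constant on each sampling interval *)
  (Hhold : forall (k : nat) s, t0 + INR k * dt <= s < t0 + INR k * dt + dt ->
             u s = u (t0 + INR k * dt))
  (* (A1) common minimum acceleration *)
  (HA1 : forall t, umin <= up t)
  (* (SA) sampling / forward invariance, for b in {b2, bF, beta2} *)
  (HSA_b2 : forall (k : nat), t0 + INR k * dt + dt <= tm ->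
     forall d, right_deriv (fun s => b2 (phi / L) delta (x s) (v s) (xp s))
                 (t0 + INR k * dt) d ->
     0 <= b2 (phi / L) delta (x (t0 + INR k * dt)) (v (t0 + INR k * dt))
             (xp (t0 + INR k * dt)) ->
     0 <= d + k2 * b2 (phi / L) delta (x (t0 + INR k * dt)) (v (t0 + INR k * dt))
             (xp (t0 + INR k * dt)) ->
     0 <= b2 (phi / L) delta (x (t0 + INR k * dt + dt)) (v (t0 + INR k * dt + dt))
             (xp (t0 + INR k * dt + dt)))
  (HSA_bF : forall (k : nat), t0 + INR k * dt + dt <= tm ->
     forall d, right_deriv (fun s => bF (phi / L) delta k2 umin (x s) (v s) (xp s) (vp s))
                 (t0 + INR k * dt) d ->
     0 <= bF (phi / L) delta k2 umin (x (t0 + INR k * dt)) (v (t0 + INR k * dt))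
             (xp (t0 + INR k * dt)) (vp (t0 + INR k * dt)) ->
     0 <= d + k2 * bF (phi / L) delta k2 umin (x (t0 + INR k * dt)) (v (t0 + INR k * dt))
             (xp (t0 + INR k * dt)) (vp (t0 + INR k * dt)) ->
     0 <= bF (phi / L) delta k2 umin (x (t0 + INR k * dt + dt)) (v (t0 + INR k * dt + dt))
             (xp (t0 + INR k * dt + dt)) (vp (t0 + INR k * dt + dt)))
  (HSA_beta : forall (k : nat), t0 + INR k * dt + dt <= tm ->
     forall d, right_deriv (fun s => beta2 (phi / L) umin (x s) (v s) (vp s))
                 (t0 + INR k * dt) d ->
     0 <= beta2 (phi / L) umin (x (t0 + INR k * dt)) (v (t0 + INR k * dt))
             (vp (t0 + INR k * dt)) ->
     0 <= d + k2 * beta2 (phi / L) umin (x (t0 + INR k * dt)) (v (t0 + INR k * dt))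
             (vp (t0 + INR k * dt)) ->
     0 <= beta2 (phi / L) umin (x (t0 + INR k * dt + dt)) (v (t0 + INR k * dt + dt))
             (vp (t0 + INR k * dt + dt)))
  (* (A4) initial conditions *)
  (HA4_b2 : 0 <= b2 (phi / L) delta (x t0) (v t0) (xp t0))
  (HA4_bF : 0 <= bF (phi / L) delta k2 umin (x t0) (v t0) (xp t0) (vp t0))
  (HA4_beta : 0 <= beta2 (phi / L) umin (x t0) (v t0) (vp t0))
  (* theorem hypotheses *)
  (Hv : forall t, t0 <= t <= tm -> 0 <= v t)
  (Humin0 : umin <= 0)
  (* applied control is a feasible point of QP_2(t) whenever QP_2(t) is feasible *)
  (Happly : forall (k : nat),
     let t := t0 + INR k * dt in
     QP2_feasible (phi / L) delta k2 umin umax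
       (x t) (v t) (xp t) (vp t) (up t) (c1 t) (c2 t) ->
     exists e, QP2_constraints (phi / L) delta k2 umin umax
       (x t) (v t) (xp t) (vp t) (up t) (c1 t) (c2 t) (u t) e) :
  forall (k : nat),
    (forall s, t0 + INR k * dt <= s <= t0 + INR k * dt + dt -> t0 <= s <= tm) ->
    let t := t0 + INR k * dt in
    QP2_feasible (phi / L) delta k2 umin umax
      (x t) (v t) (xp t) (vp t) (up t) (c1 t) (c2 t).
Proof.
  set (p2 := phi / L).
  assert (Hp2 : 0 < p2) by (unfold p2; apply Rdiv_lt_0_compat; lra).
  assert (Inv : forall k : nat, t0 + INR k * dt + dt <= tm ->
    0 <= bF p2 delta k2 umin (x (t0 + INR k * dt)) (v (t0 + INR k * dt))
            (xp (t0 + INR k * dt)) (vp (t0 + INR k * dt)) /\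
    0 <= beta2 p2 umin (x (t0 + INR k * dt)) (v (t0 + INR k * dt)) (vp (t0 + INR k * dt))).
  { induction k as [|k IH]; intros Hk.
    - simpl. rewrite Rmult_0_l, Rplus_0_r. split; assumption.
    - rewrite S_INR in Hk |- *.
      assert (Hkpos := pos_INR k).
      assert (Hk' : t0 + INR k * dt + dt <= tm) by nra.
      destruct (IH Hk') as [IF IB].
      set (t := t0 + INR k * dt) in *.
      assert (Htt : t0 <= t < tm) by (unfold t; nra).
      assert (Hvt : 0 <= v t) by (apply Hv; lra).
      assert (Hf : QP2_feasible p2 delta k2 umin umax (x t) (v t) (xp t) (vp t) (up t) (c1 t) (c2 t)).
      { apply feas; try lra; auto. }
      destruct (Happly k Hf) as [e [Hc [Hu [He Hcl]]]]. fold t in Hc, Hu, He, Hcl. fold p2 in Hc, He.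
      replace (t0 + (INR k + 1) * dt) with (t + dt) by (unfold t; ring).
      split.
      + apply (HSA_bF k Hk' _ (rd_bF p2 delta k2 umin x v xp vp t _ _ _ _
                   (Hdx t Htt) (Hdv t Htt) (Hdxp t Htt) (Hdvp t Htt))); fold t; auto.
        assert (Hm : 0 <= k2 * bcbf2 p2 delta k2 (x t) (v t) (xp t) (vp t) (u t))
          by (apply Rmult_le_pos; lra).
        match goal with |- 0 <= ?a => replace a with
          (eta2 p2 k2 umin (x t) (v t) (vp t) (up t) (u t) + k2 * bcbf2 p2 delta k2 (x t) (v t) (xp t) (vp t) (u t)) end.
        * lra.
        * unfold eta2, bcbf2, bF, beta2, b2. fold p2. ring.
      + apply (HSA_beta k Hk' _ (rd_beta p2 umin x v vp t _ _ _
                   (Hdx t Htt) (Hdv t Htt) (Hdvp t Htt))); fold t; auto.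
        unfold eta2 in He. unfold beta2 in *. match goal with |- 0 <= ?a => replace a with (up t - u t - 2 * p2 * v t * u t - p2 * v t * umin + k2 * (vp t - v t - p2 * v t ^ 2 - p2 * x t * umin)) by (fold p2; ring) end. exact He. }
  intros k Hs t.
  assert (Hkpos := pos_INR k).
  assert (Hr : t0 <= t + dt <= tm) by (apply Hs; unfold t; lra).
  assert (Hk : t0 + INR k * dt + dt <= tm) by (unfold t in Hr; lra).
  destruct (Inv k Hk) as [IF IB].
  apply feas; try lra; auto.
  apply Hv. unfold t. split; nra.
Qed.
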